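(* With three agents, items $\mathcal{M}=\{(j,k): j\in\{1,2,3\},k\in\{1,2,3,4\}\}$ and the matrices $$B=\begin{pmatrix}1&1&1&1\\1&1&1&1\\1&1&1&1\end{pmatrix},\ O=\begin{pmatrix}17&25&12&1\\2&22&3&28\\11&0&21&23\end{pmatrix},\ E^1=\begin{pmatrix}-3&1&1&1\\0&0&0&0\\0&0&0&0\end{pmatrix},$$ $$E^2=\begin{pmatrix}-3&1&0&0\\1&0&0&0\\1&0&0&0\end{pmatrix},\ E^3=\begin{pmatrix}-3&0&1&0\\0&0&1&0\\0&0&0&1\end{pmatrix},$$ define additive utilities $u_i((j,k))=10^6B_{jk}+10^3O_{jk}+E^i_{jk}$ and $w_i((j,k))=10^6B_{jk}+10^3O_{jk}-E^i_{jk}$ for $i\in[3]$. Let $I=(\mathcal{M},[3],(u_i))$ and $J=(\mathcal{M},[3],(w_i))$. Then: there is an MmS allocation for $I$ but no MmS allocation for $-I=(\mathcal{M},[3],(-u_i))$; and there is no MmS allocation for $J$ but there is an MmS allocation for $-J=(\mathcal{M},[3],(-w_i))$.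
   Context: $\Pi_N(\mathcal{M})$ is the set of ordered $N$-partitions of $\mathcal{M}$ (parts may be empty). For an additive function $v$, $MmS_{v}^N(\mathcal{M}):=\max_{(S_1,\ldots,S_N)\in\Pi_N(\mathcal{M})}\min_{j} v(S_j)$. An MmS allocation for an instance $(\mathcal{M},[N],(v_i))$ is an allocation $(S_1,\dots,S_N)\in\Pi_N(\mathcal{M})$ with $v_i(S_i)\ge MmS_{v_i}^N(\mathcal{M})$ for all $i$. *)

(* Defs.v *)
From HB Require Import structures.
From mathcomp Require Import all_boot all_order all_algebra.
Set Implicit Arguments. Unset Strict Implicit. Unset Printing Implicit Defensive.
Import Order.TTheory GRing.Theory Num.Theory.
Local Open Scope ring_scope.

Section MmS.
Variables (M : finType) (N : nat).
(* Agents are 'I_N.+1, i.e. N.+1 >= 1 agents. *)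

Definition addv (v : M -> int) (S : {set M}) : int := \sum_(x in S) v x.

(* ordered (N.+1)-partitions of M (parts may be empty) *)
Definition is_partition (P : {ffun 'I_N.+1 -> {set M}}) : bool :=
  [forall i, forall j, (i != j) ==> [disjoint P i & P j]] &&
  (\bigcup_(j < N.+1) P j == setT).

Definition trivial_partition : {ffun 'I_N.+1 -> {set M}} :=
  [ffun j => if j == ord0 then setT else set0].

(* min_j v(S_j); the seed v(P ord0) is itself one of the terms *)
Definition minpart (v : M -> int) (P : {ffun 'I_N.+1 -> {set M}}) : int :=
  \big[Num.min/ addv v (P ord0)]_(j < N.+1) addv v (P j).

(* MmS_v^{N+1}(M) = max over partitions of min_j v(S_j); the seed is the
   value of trivial_partition, which is itself a partition. *)
Definition MmS (v : M -> int) : int :=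
  \big[Num.max/ minpart v trivial_partition]_(P | is_partition P) minpart v P.

Definition MmS_allocation (v : 'I_N.+1 -> M -> int)
    (A : {ffun 'I_N.+1 -> {set M}}) : Prop :=
  is_partition A /\ forall i, MmS (v i) <= addv (v i) (A i).

End MmS.

Definition Item := ('I_3 * 'I_4)%type.

Definition entry (m : seq (seq int)) (x : Item) : int :=
  nth 0 (nth [::] m x.1) x.2.

Definition Bm : seq (seq int) := [:: [:: 1; 1; 1; 1]; [:: 1; 1; 1; 1]; [:: 1; 1; 1; 1]].
Definition Om : seq (seq int) :=
  [:: [:: 17; 25; 12; 1]; [:: 2; 22; 3; 28]; [:: 11; 0; 21; 23]].
Definition E1 : seq (seq int) := [:: [:: -3; 1; 1; 1]; [:: 0; 0; 0; 0]; [:: 0; 0; 0; 0]].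
Definition E2 : seq (seq int) := [:: [:: -3; 1; 0; 0]; [:: 1; 0; 0; 0]; [:: 1; 0; 0; 0]].
Definition E3 : seq (seq int) := [:: [:: -3; 0; 1; 0]; [:: 0; 0; 1; 0]; [:: 0; 0; 0; 1]].

Definition Em (i : 'I_3) : seq (seq int) :=
  match val i with 0 => E1 | 1 => E2 | _ => E3 end.

Definition u (i : 'I_3) (x : Item) : int :=
  10 ^+ 6 * entry Bm x + 10 ^+ 3 * entry Om x + entry (Em i) x.
Definition w (i : 'I_3) (x : Item) : int :=
  10 ^+ 6 * entry Bm x + 10 ^+ 3 * entry Om x - entry (Em i) x.

(* Main.v *)
Require Import Defs.
From Stdlib Require Import ZArith.
From HB Require Import structures.
From mathcomp Require Import all_boot all_order all_algebra zify ssrZ.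
Set Implicit Arguments. Unset Strict Implicit. Unset Printing Implicit Defensive.
Import Order.TTheory GRing.Theory Num.Theory.

Definition o0 : 'I_3 := @Ordinal 3 0 isT.
Definition o1 : 'I_3 := @Ordinal 3 1 isT.
Definition o2 : 'I_3 := @Ordinal 3 2 isT.
Definition p0 : 'I_4 := @Ordinal 4 0 isT.
Definition p1 : 'I_4 := @Ordinal 4 1 isT.
Definition p2 : 'I_4 := @Ordinal 4 2 isT.
Definition p3 : 'I_4 := @Ordinal 4 3 isT.

Definition its : seq Item :=
  [seq (i, j) | i <- [:: o0; o1; o2], j <- [:: p0; p1; p2; p3]].

Lemma its_perm : perm_eq its (index_enum Item).
Proof.
apply: uniq_perm; first by [].
  exact: index_enum_uniq.
move=> x; rewrite mem_index_enum.
by case: x => [[[|[|[|n]]] Hi] [[|[|[|[|m]]]] Hj]].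
Qed.

Lemma leZ (x y : int) : (x <= y)%R = Z.leb (Z_of_int x) (Z_of_int y).
Proof.
apply/idP/idP => h; [apply/Z.leb_le | move/Z.leb_le: h]; lia.
Qed.

Lemma ltZ (x y : int) : (x < y)%R = Z.ltb (Z_of_int x) (Z_of_int y).
Proof.
apply/idP/idP => h; [apply/Z.ltb_lt | move/Z.ltb_lt: h]; lia.
Qed.

Lemma ord3 (j : 'I_3) : j = o0 \/ j = o1 \/ j = o2.
Proof.
case: j => [[|[|[|k]]] Hk]; [left|right;left|right;right|by []];
  by apply: val_inj.
Qed.

Fixpoint dfs (V : 'I_3 -> Item -> Z) (leaf : Z -> Z -> Z -> bool)
  (s : seq Item) (a0 a1 a2 : Z) : bool :=
  match s with
  | [::] => leaf a0 a1 a2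
  | x :: s' => [&& dfs V leaf s' (Z.add a0 (V o0 x)) a1 a2,
                  dfs V leaf s' a0 (Z.add a1 (V o1 x)) a2 &
                  dfs V leaf s' a0 a1 (Z.add a2 (V o2 x))]
  end.

Fixpoint sumsel (f : Item -> 'I_3) (j : 'I_3) (V : Item -> Z) (s : seq Item) : Z :=
  match s with
  | [::] => Z0
  | x :: s' => if f x == j then Z.add (V x) (sumsel f j V s') else sumsel f j V s'
  end.

Lemma sumselE f j V s : sumsel f j V s = (\sum_(x <- s | f x == j) V x)%R.
Proof.
elim: s => [|x s IH] /=; first by rewrite big_nil.
by rewrite big_cons IH; case: (f x == j).
Qed.

Lemma dfs_ok V leaf s a0 a1 a2 : dfs V leaf s a0 a1 a2 -> forall f : Item -> 'I_3,
  leaf (Z.add a0 (sumsel f o0 (V o0) s)) (Z.add a1 (sumsel f o1 (V o1) s))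
       (Z.add a2 (sumsel f o2 (V o2) s)).
Proof.
elim: s a0 a1 a2 => [|x s IH] a0 a1 a2 /=.
  by move=> h f; rewrite !Z.add_0_r.
move=> /and3P [h0 h1 h2] f.
case Efx: (f x) => [[|[|[|k]]] Hk] //.
- have /= := IH _ _ _ h0 f. by rewrite -!Z.add_assoc.
- have /= := IH _ _ _ h1 f. by rewrite -!Z.add_assoc.
- have /= := IH _ _ _ h2 f. by rewrite -!Z.add_assoc.
Qed.

Lemma dfs_ok0 V leaf s : dfs V leaf s Z0 Z0 Z0 -> forall f : Item -> 'I_3,
  leaf (sumsel f o0 (V o0) s) (sumsel f o1 (V o1) s) (sumsel f o2 (V o2) s).
Proof. by move=> h f; have := dfs_ok h f. Qed.

Local Open Scope ring_scope.

Definition Pf (f : Item -> 'I_3) : {ffun 'I_3 -> {set Item}} :=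
  [ffun j => [set x | f x == j]].

Lemma Pf_part f : is_partition (Pf f).
Proof.
apply/andP; split.
  apply/forallP => i; apply/forallP => j; apply/implyP => ij.
  apply/pred0P => x /=; rewrite !ffunE !inE.
  apply/andP => -[/eqP e1 /eqP e2]; move/eqP: ij; apply; by rewrite -e1 -e2.
apply/eqP/setP => x; rewrite inE; apply/bigcupP; exists (f x) => //.
by rewrite ffunE inE.
Qed.

Definition fP (P : {ffun 'I_3 -> {set Item}}) (x : Item) : 'I_3 :=
  odflt o0 [pick j | x \in P j].

Lemma part_eq P : is_partition P -> P = Pf (fP P).
Proof.
move=> /andP [/forallP hd /eqP hc].
have hx : forall x, exists j, x \in P j.
  move=> x; have : x \in \bigcup_(j < 3) P j by rewrite hc inE.
  by case/bigcupP => j _ xj; exists j.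
have uniq_j : forall x i j, x \in P i -> x \in P j -> i = j.
  move=> x i j xi xj; apply/eqP; apply/negPn/negP => ij.
  have := forallP (hd i) j; rewrite ij /= => /pred0P /(_ x) /=.
  by rewrite xi xj.
apply/ffunP => j; rewrite ffunE; apply/setP => x; rewrite inE /fP.
case: pickP => [k xk|none] /=.
  apply/idP/eqP => [xj|<-//]; exact: uniq_j xk xj.
by case: (hx x) => k xk; move: (none k); rewrite xk.
Qed.

Lemma addvZ (v : Item -> int) VZ (hv : forall x, Z_of_int (v x) = VZ x) f j :
  Z_of_int (Defs.addv v (Pf f j)) = sumsel f j VZ its.
Proof.
rewrite /addv ffunE raddf_sum sumselE.
rewrite (eq_bigl (fun x => f x == j)); last by move=> x; rewrite inE.
rewrite -(perm_big _ its_perm) /=.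
by apply: eq_bigr => x _; rewrite hv.
Qed.

Lemma minpart_le (v : Item -> int) (P : {ffun 'I_3 -> {set Item}}) m (j : 'I_3) :
  Defs.addv v (P j) <= m -> minpart v P <= m.
Proof. move=> h; apply: le_trans h; exact: bigmin_le. Qed.

Lemma le_minpart (v : Item -> int) (P : {ffun 'I_3 -> {set Item}}) m :
  (forall j, m <= Defs.addv v (P j)) -> m <= minpart v P.
Proof. move=> h; apply: le_bigmin => // j _. Qed.

Lemma triv_part : is_partition (@trivial_partition Item 2).
Proof.
have -> : @trivial_partition Item 2 = Pf (fun _ => o0).
  apply/ffunP => j; rewrite !ffunE; apply/setP => x; rewrite !inE.
  by case: j => [[|[|[|k]]] Hk]; rewrite ?inE.
exact: Pf_part.
Qed.

Lemma MmS_ge (v : Item -> int) (P : {ffun 'I_3 -> {set Item}}) :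
  is_partition P -> minpart v P <= @MmS Item 2 v.
Proof. by move=> hP; rewrite /MmS; apply: le_bigmax_cond. Qed.

Definition lfU (m : Z) (a b c : Z) := [|| Z.leb a m, Z.leb b m | Z.leb c m].
Definition lfL (m : Z) (a b c : Z) := [|| Z.ltb a m, Z.ltb b m | Z.ltb c m].

Lemma ub (v : Item -> int) VZ (hv : forall x, Z_of_int (v x) = VZ x) (mZ : Z) :
  dfs (fun _ => VZ) (lfU mZ) its Z0 Z0 Z0 -> @MmS Item 2 v <= int_of_Z mZ.
Proof.
move=> hd.
have H : forall P : {ffun 'I_3 -> {set Item}}, is_partition P -> minpart v P <= int_of_Z mZ.
  move=> P hP; rewrite (part_eq hP).
  have := dfs_ok0 hd (fP P); rewrite /lfU => /or3P [] h.
  - by apply: (minpart_le (j := o0)); rewrite leZ (addvZ hv) int_of_ZK.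
  - by apply: (minpart_le (j := o1)); rewrite leZ (addvZ hv) int_of_ZK.
  - by apply: (minpart_le (j := o2)); rewrite leZ (addvZ hv) int_of_ZK.
apply: bigmax_le; first exact: H triv_part.
by move=> P hP; apply: H.
Qed.

Lemma lb (v : Item -> int) VZ (hv : forall x, Z_of_int (v x) = VZ x) (lZ : Z) g :
  [&& Z.leb lZ (sumsel g o0 VZ its), Z.leb lZ (sumsel g o1 VZ its)
    & Z.leb lZ (sumsel g o2 VZ its)] -> int_of_Z lZ <= @MmS Item 2 v.
Proof.
move=> /and3P [h0 h1 h2].
apply: le_trans (MmS_ge v (Pf_part g)).
apply: le_minpart => j; rewrite leZ (addvZ hv) int_of_ZK.
by case: (ord3 j) => [->|[->|->]].
Qed.

Lemma noalloc (v : 'I_3 -> Item -> int) VZ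
  (hv : forall i x, Z_of_int (v i x) = VZ i x) (lZ : Z)
  (hl : forall i, int_of_Z lZ <= @MmS Item 2 (v i)) :
  dfs VZ (lfL lZ) its Z0 Z0 Z0 -> ~ exists A, @MmS_allocation Item 2 v A.
Proof.
move=> hd [A [hA hall]]; rewrite (part_eq hA) in hall.
have := dfs_ok0 hd (fP A); rewrite /lfL => /or3P [] /Z.ltb_lt h.
- have := le_trans (hl o0) (hall o0).
  by rewrite leZ (addvZ (hv o0)) int_of_ZK => /Z.leb_le; lia.
- have := le_trans (hl o1) (hall o1).
  by rewrite leZ (addvZ (hv o1)) int_of_ZK => /Z.leb_le; lia.
- have := le_trans (hl o2) (hall o2).
  by rewrite leZ (addvZ (hv o2)) int_of_ZK => /Z.leb_le; lia.
Qed.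

Lemma alloc (v : 'I_3 -> Item -> int) VZ
  (hv : forall i x, Z_of_int (v i x) = VZ i x) (mZ : Z)
  (hub : forall i, dfs (fun _ => VZ i) (lfU mZ) its Z0 Z0 Z0) f
  (hf : [&& Z.leb mZ (sumsel f o0 (VZ o0) its), Z.leb mZ (sumsel f o1 (VZ o1) its)
          & Z.leb mZ (sumsel f o2 (VZ o2) its)]) :
  exists A, @MmS_allocation Item 2 v A.
Proof.
exists (Pf f); split; first exact: Pf_part.
move=> i; apply: le_trans (ub (hv i) (hub i)) _.
rewrite leZ (addvZ (hv i)) int_of_ZK.
by case/and3P: hf; case: (ord3 i) => [->|[->|->]].
Qed.

Local Open Scope Z_scope.
Definition uZ (i : 'I_3) (x : Item) : Z :=
  Z.add (Z.add (Z.mul 1000000 (Z_of_int (entry Bm x))) (Z.mul 1000 (Z_of_int (entry Om x))))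
        (Z_of_int (entry (Em i) x)).
Definition wZ (i : 'I_3) (x : Item) : Z :=
  Z.sub (Z.add (Z.mul 1000000 (Z_of_int (entry Bm x))) (Z.mul 1000 (Z_of_int (entry Om x))))
        (Z_of_int (entry (Em i) x)).
Definition z106 : Z := 1000000.
Definition z103 : Z := 1000.
Definition mU : Z := 4055000.
Definition mL : Z := -4055000.
Local Close Scope Z_scope.

Lemma p106 : (Z_of_int (10 ^+ 6) = z106 :> Z).
Proof. by rewrite rmorphXn; vm_compute. Qed.
Lemma p103 : (Z_of_int (10 ^+ 3) = z103 :> Z).
Proof. by rewrite rmorphXn; vm_compute. Qed.

Lemma huZ i x : Z_of_int (u i x) = uZ i x.
Proof. by rewrite /u !rmorphD !rmorphM. Qed.
Lemma hwZ i x : Z_of_int (w i x) = wZ i x.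
Proof. by rewrite /w rmorphB !rmorphD !rmorphM. Qed.

Definition fl (l : seq nat) (x : Item) : 'I_3 :=
  match nth 0%N l (x.1 * 4 + x.2)%N with 0%N => o0 | 1%N => o1 | _ => o2 end.

Definition fA := fl [:: 2; 1; 2; 0; 1; 0; 2; 1; 0; 1; 0; 2]%N.
Definition g0 := fl [:: 0; 0; 0; 0; 1; 1; 1; 1; 2; 2; 2; 2]%N.
Definition g1 := fl [:: 0; 0; 1; 2; 0; 1; 2; 2; 0; 1; 1; 2]%N.
Definition g2 := fl [:: 0; 1; 0; 2; 1; 2; 0; 1; 2; 1; 2; 0]%N.

Definition nuZ i x := Z.opp (uZ i x).
Definition nwZ i x := Z.opp (wZ i x).
Lemma hnu i x : Z_of_int (- u i x) = nuZ i x.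
Proof. by rewrite /nuZ -huZ raddfN. Qed.
Lemma hnw i x : Z_of_int (- w i x) = nwZ i x.
Proof. by rewrite /nwZ -hwZ raddfN. Qed.

Lemma part1 : exists A, @MmS_allocation Item 2 u A.
Proof.
apply: (@alloc u uZ huZ mU _ fA); last by vm_compute.
by move=> i; case: (ord3 i) => [->|[->|->]]; vm_compute.
Qed.

Lemma part4 : exists A, @MmS_allocation Item 2 (fun i x => - w i x) A.
Proof.
apply: (@alloc _ nwZ hnw mL _ fA); last by vm_compute.
by move=> i; case: (ord3 i) => [->|[->|->]]; vm_compute.
Qed.

Lemma part2 : ~ exists A, @MmS_allocation Item 2 (fun i x => - u i x) A.
Proof.
apply: (@noalloc _ nuZ hnu mL); last by vm_compute.
move=> i; case: (ord3 i) => [->|[->|->]].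
- by apply: (@lb _ (nuZ o0) (hnu o0) mL g0); vm_compute.
- by apply: (@lb _ (nuZ o1) (hnu o1) mL g1); vm_compute.
- by apply: (@lb _ (nuZ o2) (hnu o2) mL g2); vm_compute.
Qed.

Lemma part3 : ~ exists A, @MmS_allocation Item 2 w A.
Proof.
apply: (@noalloc _ wZ hwZ mU); last by vm_compute.
move=> i; case: (ord3 i) => [->|[->|->]].
- by apply: (@lb _ (wZ o0) (hwZ o0) mU g0); vm_compute.
- by apply: (@lb _ (wZ o1) (hwZ o1) mU g1); vm_compute.
- by apply: (@lb _ (wZ o2) (hwZ o2) mU g2); vm_compute.
Qed.

Theorem proposition4 :
  (exists A, @MmS_allocation Item 2 u A) /\
  ~ (exists A, @MmS_allocation Item 2 (fun i x => - u i x) A) /\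
  ~ (exists A, @MmS_allocation Item 2 w A) /\
  (exists A, @MmS_allocation Item 2 (fun i x => - w i x) A).
Proof.
split; first exact: part1.
split; first exact: part2.
split; first exact: part3.
exact: part4.
Qed.
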